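(* Let $G$ be an lcsc group with Haar measure $m_G$, let $V\subset G$ be a compact symmetric neighbourhood of the identity generating $G$, and let $d_V$ be the associated word metric with balls $B_n=\{g: d_V(e,g)\le n\}=V^n$, $n\in\mathbb{N}$. Assume the doubling condition: there is $C_0$ with $m_G(B_{2n})\le C_0\, m_G(B_n)$ for all integers $n\ge 1$. Then there exist constants $\delta>0$ and $C>0$ such that $m_G(B_{n+1}\setminus B_n)\le C n^{-\delta} m_G(B_n)$ for all integers $n\ge 1$. In particular, the balls are asymptotically invariant under right translations: $\lim_{n\to\infty} m_G(B_ng\,\Delta\, B_n)/m_G(B_n)=0$ for every $g\in G$.
   Context: For a compact symmetric generating set $V$ (i.e. $V=V^{-1}$ and $\bigcup_n V^n=G$), $|g|_V=\min\{n: g\in V^n\}$ with $V^0=\{e\}$ and $V^n$ the set of $n$-fold products of elements of $V$; the word metric is $d_V(g,h)=|g^{-1}h|_V$, which is left-invariant. $\Delta$ denotes symmetric difference. *)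

(* Defs.v *)
From HB Require Import structures.
From mathcomp Require Import all_boot all_order all_algebra.
From mathcomp Require Import all_classical all_reals all_analysis.
Set Implicit Arguments. Unset Strict Implicit. Unset Printing Implicit Defensive.
Import Order.TTheory GRing.Theory Num.Theory numFieldNormedType.Exports.
Local Open Scope classical_set_scope. Local Open Scope ring_scope.

Definition lcsc_group (G : ptopologicalType) (mul : G -> G -> G) (inv : G -> G)
    (e : G) : Prop :=
  [/\ (forall x y z, mul x (mul y z) = mul (mul x y) z),
      (forall x, mul e x = x /\ mul x e = x),
      (forall x, mul (inv x) x = e /\ mul x (inv x) = e),
      continuous (fun p : G * G => mul p.1 p.2) /\ continuous inv &
      [/\ hausdorff_space G, locally_compact [set: G] & @second_countable G]].

Notation borel_of G := (g_sigma_algebraType (@open G)).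

(* A left Haar measure on the Borel sets of [G]: a left-invariant Borel
   measure that is finite on compact sets and positive on non-empty open
   sets (on an lcsc group such a measure is automatically Radon). *)
Definition haar_measure (R : realType) (G : ptopologicalType)
    (mul : G -> G -> G) (m : {measure set (borel_of G) -> \bar R}) : Prop :=
  [/\ (forall (g : G) (A : set (borel_of G)), measurable A ->
         m [set mul g x | x in A] = m A),
      (forall K : set G, compact K -> (m K < +oo)%E) &
      (forall U : set G, open U -> U !=set0 -> (0 < m U)%E)].

Fixpoint set_pow (G : Type) (mul : G -> G -> G) (e : G) (V : set G) (n : nat)
    : set G :=
  match n with
  | 0 => [set e]
  | n'.+1 => [set y | exists2 x, set_pow mul e V n' x & exists2 v, V v & y = mul x v]
  end.

Definition compact_sym_gen_nbhs (G : ptopologicalType) (mul : G -> G -> G)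
    (inv : G -> G) (e : G) (V : set G) : Prop :=
  [/\ compact V, (forall v, V v -> V (inv v)), nbhs e V &
      \bigcup_n set_pow mul e V n = [set: G]].

Definition symdiff (T : Type) (A B : set T) : set T := (A `\` B) `|` (B `\` A).

(* Main.v *)
Require Import Defs.
From HB Require Import structures.
From mathcomp Require Import all_boot all_order all_algebra.
From mathcomp Require Import all_classical all_reals all_analysis.
From mathcomp Require Import zify ring lra.
Import Order.TTheory GRing.Theory Num.Theory numFieldNormedType.Exports.
Local Open Scope classical_set_scope.
Local Open Scope ring_scope.

Section Main.



Variables (R : realType) (G : ptopologicalType) (mul : G -> G -> G) (inv : G -> G) (e : G)
  (m : {measure set (borel_of G) -> \bar R}) (V : set G).
Hypothesis massoc : forall x y z, mul x (mul y z) = mul (mul x y) z.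
Hypothesis munit : forall x, mul e x = x /\ mul x e = x.
Hypothesis minv : forall x, mul (inv x) x = e /\ mul x (inv x) = e.
Hypothesis mcont : continuous (fun p : G * G => mul p.1 p.2).
Hypothesis hG : hausdorff_space G.
Hypothesis haar_inv : forall (g : G) (A : set (borel_of G)), measurable A ->
         m [set mul g x | x in A] = m A.
Hypothesis haar_fin : forall K : set G, compact K -> (m K < +oo)%E.
Hypothesis haar_pos : forall U : set G, open U -> U !=set0 -> (0 < m U)%E.
Hypothesis Vcpt : compact V.
Hypothesis Vsym : forall v, V v -> V (inv v).
Hypothesis Vnbhs : nbhs e V.

Let Ve : V e := nbhs_singleton Vnbhs.

Local Notation P := (set_pow mul e V).

Lemma mul1g x : mul e x = x. Proof. by case: (munit x). Qed.
Lemma mulg1 x : mul x e = x. Proof. by case: (munit x). Qed.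
Lemma mulVg x : mul (inv x) x = e. Proof. by case: (minv x). Qed.
Lemma mulgV x : mul x (inv x) = e. Proof. by case: (minv x). Qed.

Lemma invM x y : inv (mul x y) = mul (inv y) (inv x).
Proof.
have h : mul (mul x y) (mul (inv y) (inv x)) = e.
  by rewrite -massoc (massoc y) mulgV mul1g mulgV.
by rewrite -[inv (mul x y)]mulg1 -h massoc mulVg mul1g.
Qed.

Lemma invK x : inv (inv x) = x.
Proof. by rewrite -[inv (inv x)]mulg1 -(mulVg x) massoc mulVg mul1g. Qed.

Lemma powS_sub n : P n `<=` P n.+1.
Proof. by move=> x Px; exists x => //; exists e => //; rewrite mulg1. Qed.

Lemma pow_mono m1 n : (m1 <= n)%N -> P m1 `<=` P n.
Proof.
move=> /subnK <-; elim: (n - m1)%N => [|k IH] //= x /IH; exact: powS_sub.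
Qed.

Lemma pow0 x : P 0 x -> x = e. Proof. by []. Qed.

Lemma pow1 v : V v -> P 1 v.
Proof. by move=> Vv; exists e => //; exists v => //; rewrite mul1g. Qed.

Lemma pow_add a b x y : P a x -> P b y -> P (a + b) (mul x y).
Proof.
move=> Px; elim: b y => [|b IH] y /=.
  by move=> ->; rewrite addn0 mulg1.
case=> y' Py' [v Vv ->]; rewrite addnS; exists (mul x y'); first exact: IH.
by exists v.
Qed.

Lemma pow_split a b z : P (a + b) z -> exists x y, [/\ P a x, P b y & z = mul x y].
Proof.
elim: b z => [|b IH] z.
  by rewrite addn0 => Pz; exists z, e; rewrite mulg1.
rewrite addnS /= => -[z' /IH [x [y [Px Py ->]]] [v Vv ->]].
exists x, (mul y v); split => //; first by exists y => //; exists v.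

Qed.

Lemma pow_inv n x : P n x -> P n (inv x).
Proof.
elim: n x => [|n IH] x /=; first by move=> ->; rewrite -[inv e]mul1g mulgV.
case=> x' /IH Px' [v Vv ->]; rewrite invM; change (P (1 + n) (mul (inv v) (inv x'))).
apply: pow_add => //; by apply: pow1; apply: Vsym.
Qed.


Lemma closed_meas (U : set G) : closed U -> measurable (U : set (borel_of G)).
Proof.
move=> cU; rewrite -[U]setCK; apply: measurableC; apply: sub_sigma_algebra.
exact: closed_openC.
Qed.

Lemma cpt_meas (K : set G) : compact K -> measurable (K : set (borel_of G)).
Proof. by move=> cK; apply: closed_meas; exact: compact_closed. Qed.

Lemma cpt_mul (A B : set G) : compact A -> compact B ->
  compact ((fun p : G * G => mul p.1 p.2) @` (A `*` B)).
Proof.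
move=> cA cB; apply: continuous_compact; last exact: compact_setX.
exact: continuous_subspaceT.
Qed.

Lemma P_cpt n : compact (P n).
Proof.
elim: n => [|n IH]; first exact: (@compact_set1 G e).
have -> : P n.+1 = (fun p : G * G => mul p.1 p.2) @` (P n `*` V).
  apply/seteqP; split => y /=.
  - by case=> x Px [v Vv ->]; exists (x, v).
  - by case=> -[x v] [/= Px Vv] <-; exists x => //; exists v.
exact: cpt_mul.
Qed.

Definition ball x n : set G := [set mul x y | y in P n].

Lemma ball_cpt x n : compact (ball x n).
Proof.
have -> : ball x n = (fun p : G * G => mul p.1 p.2) @` ([set x] `*` P n).
  apply/seteqP; split => y /=.
  - by case=> z Pz <-; exists (x, z).
  - by case=> -[a z] [/= -> Pz] <-; exists z.
apply: cpt_mul; [exact: compact_set1 | exact: P_cpt].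
Qed.

Lemma rtr_cpt g n : compact [set mul y g | y in P n].
Proof.
have -> : [set mul y g | y in P n] = (fun p : G * G => mul p.1 p.2) @` (P n `*` [set g]).
  apply/seteqP; split => y /=.
  - by case=> z Pz <-; exists (z, g).
  - by case=> -[z a] [/= Pz ->] <-; exists z.
apply: cpt_mul; [exact: P_cpt | exact: compact_set1].
Qed.

Lemma P_meas n : measurable (P n : set (borel_of G)).
Proof. apply: cpt_meas; exact: P_cpt. Qed.

Lemma ball_meas x n : measurable (ball x n : set (borel_of G)).
Proof. apply: cpt_meas; exact: ball_cpt. Qed.

Definition b n := fine (m (P n)).

Lemma sub_fin (X : set G) n : measurable (X : set (borel_of G)) -> X `<=` P n ->
  m X = (fine (m X))%:E.
Proof.
move=> mX XP; rewrite fineK // ge0_fin_numE //.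
apply: (le_lt_trans _ (haar_fin _ (P_cpt n))).
by apply: le_measure => //; rewrite inE //; exact: P_meas.
Qed.

Lemma mP n : m (P n) = (b n)%:E.
Proof. exact: (@sub_fin _ n (P_meas n)). Qed.

Lemma b_ge0 n : 0 <= b n.
Proof. by rewrite /b fine_ge0. Qed.

Lemma b_mono m1 n : (m1 <= n)%N -> b m1 <= b n.
Proof.
move=> le; rewrite -lee_fin -!mP; apply: le_measure; rewrite ?inE; try exact: P_meas.
exact: pow_mono.
Qed.

Lemma b_pos n : (1 <= n)%N -> 0 < b n.
Proof.
move=> n1; rewrite -lte_fin -mP.
apply: (lt_le_trans (haar_pos _ (@open_interior _ V) _)).
  by exists e; exact: Vnbhs.
apply: le_measure; rewrite ?inE; try exact: P_meas.
  by apply: sub_sigma_algebra; exact: open_interior.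
move=> x /interior_subset Vx; apply: (@pow_mono 1 n n1); exact: pow1.
Qed.

Lemma mball x n : m (ball x n) = (b n)%:E.
Proof. by rewrite /ball haar_inv ?mP //; exact: P_meas. Qed.

Lemma mann a c : (a <= c)%N -> m (P c `\` P a) = (b c - b a)%:E.
Proof.
move=> ac; rewrite measureD; try exact: P_meas.
  rewrite setIidr; last exact: (@pow_mono a c ac).
  by rewrite EFinB; congr (_ - _)%E; [exact: mP c | exact: mP a].
exact: haar_fin _ (P_cpt c).
Qed.


Lemma mulKg x y : mul (inv x) (mul x y) = y.
Proof. by rewrite massoc mulVg mul1g. Qed.

Lemma mulgK x y : mul (mul y x) (inv x) = y.
Proof. by rewrite -massoc mulgV mulg1. Qed.

Fixpoint bu (F : nat -> set G) k : set G :=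
  if k is k'.+1 then bu F k' `|` F k' else set0.

Lemma bu_meas F k : (forall i, measurable (F i : set (borel_of G))) ->
  measurable (bu F k : set (borel_of G)).
Proof.
move=> mF; elim: k => [|k IH] /=; first exact: measurable0.
exact: measurableU.
Qed.

Lemma bu_mem F k y : bu F k y -> exists2 i, (i < k)%N & F i y.
Proof.
elim: k => [|k IH] //= [/IH [i ik Fi]|Fk]; first by exists i => //; exact: ltnW.
by exists k.
Qed.

Lemma bu_in F k i y : (i < k)%N -> F i y -> bu F k y.
Proof.
elim: k => [|k IH] // ik Fi /=; rewrite ltnS leq_eqVlt in ik.
case/orP: ik => [/eqP <-|ik]; [by right | by left; exact: IH].
Qed.

Lemma m_bu_le F k c : (forall i, measurable (F i : set (borel_of G))) ->
  (forall i, (i < k)%N -> m (F i) = c%:E) -> (m (bu F k) <= (c *+ k)%:E)%E.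
Proof.
move=> mF; elim: k => [|k IH] Fc /=; first by rewrite measure0.
apply: le_trans (measureU2 _ _ _) _; [exact: bu_meas | exact: mF |].
rewrite mulrSr EFinD; apply: leeD; first by apply: IH => i ik; apply: Fc; exact: ltnW.
by rewrite -[X in (X <= _)%E]/(m (F k)) Fc.
Qed.

Lemma m_bu_eq F k c : (forall i, measurable (F i : set (borel_of G))) ->
  (forall i j, (i < k)%N -> (j < k)%N -> i <> j -> F i `&` F j = set0) ->
  (forall i, (i < k)%N -> m (F i) = c%:E) -> m (bu F k) = (c *+ k)%:E.
Proof.
move=> mF; elim: k => [|k IH] Fd Fc /=; first by rewrite measure0.
rewrite measureU; [|exact: bu_meas|exact: mF|].
  rewrite -[X in (X + _)%E = _]/(m (bu F k)) -[X in (_ + X)%E = _]/(m (F k)).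
  rewrite mulrSr EFinD Fc // IH // => [i j ik jk|i ik]; last by apply: Fc; exact: ltnW.
  by apply: Fd; exact: ltnW.
apply/seteqP; split => y //= [/bu_mem [i ik Fi] Fk].
have : (F i `&` F k) y by [].
rewrite Fd //; first exact: ltnW.
by move=> ik'; rewrite ik' ltnn in ik.
Qed.


Definition Ash r N : set G := P N `\` P (N - r)%N.

Definition good r N k (f : nat -> G) :=
  (forall i, (i < k)%N -> Ash r N (f i)) /\
  (forall i j, (i < k)%N -> (j < k)%N -> i <> j -> ~ P (6 * r)%N (mul (inv (f i)) (f j))).

Lemma good_bound r N k f : (1 <= r)%N -> (4 * r <= N)%N -> good r N k f ->
  b r *+ k <= b (N - r)%N - b (N - 4 * r)%N.
Proof.
move=> r1 rN [fA fsep].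
have hz : forall i, exists p : G * G, (i < k)%N ->
    [/\ P (N - 2 * r)%N p.1, P (2 * r)%N p.2 & f i = mul p.1 p.2].
  move=> i; case: (ltnP i k) => ik; last by exists (e, e).
  have [fN _] := fA i ik.
  have : P ((N - 2 * r) + 2 * r)%N (f i) by rewrite subnK //; lia.
  by case/pow_split => x [y [Px Py ->]]; exists (x, y).
have [zw Hzw] := choice hz.
pose F i := ball (zw i).1 r.
have Fs : forall i, (i < k)%N -> F i `<=` P (N - r)%N `\` P (N - 4 * r)%N.
  move=> i ik y [u Pu <-]; have [Pz Pw fi] := Hzw i ik.
  split.
    have -> : (N - r = (N - 2 * r) + r)%N by lia.
    exact: pow_add.
  move=> Py; have [_ nfi] := fA i ik; apply: nfi.
  have -> : f i = mul (mul (zw i).1 u) (mul (inv u) (zw i).2).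
    by rewrite fi !massoc -(massoc _ u) mulgV mulg1.
  have -> : (N - r = (N - 4 * r) + (r + 2 * r))%N by lia.
  apply: pow_add => //; apply: pow_add => //; exact: pow_inv.
have Fd : forall i j, (i < k)%N -> (j < k)%N -> i <> j -> F i `&` F j = set0.
  move=> i j ik jk ij; apply/seteqP; split => y //= [[u Pu yu] [u' Pu' yu']].
  apply: (fsep i j ik jk ij).
  have [Pzi Pwi fi] := Hzw i ik; have [Pzj Pwj fj] := Hzw j jk.
  have zj : (zw j).1 = mul (mul (zw i).1 u) (inv u').
    by rewrite yu -yu' mulgK.
  have -> : mul (inv (f i)) (f j) = mul (inv (zw i).2) (mul (mul u (inv u')) (zw j).2).
    rewrite fi fj zj invM !massoc -(massoc (inv (zw i).2) (inv (zw i).1)).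
    by rewrite mulVg mulg1.
  have -> : (6 * r = 2 * r + ((r + r) + 2 * r))%N by lia.
  apply: pow_add => //; first exact: pow_inv.
  apply: pow_add => //; apply: pow_add => //; exact: pow_inv.
have mF : forall i, measurable (F i : set (borel_of G)) by move=> i; exact: ball_meas.
have hbu := m_bu_eq F k (b r) mF Fd (fun i _ => mball (zw i).1 r).
rewrite -lee_fin -hbu -mann; last lia.
apply: le_measure; rewrite ?inE; first exact: bu_meas.
  by apply: measurableD; exact: P_meas.
move=> y /bu_mem [i ik Fi]; exact: Fs Fi.
Qed.


Lemma good_le r N k f : (1 <= r)%N -> (4 * r <= N)%N -> good r N k f ->
  (k <= Num.Def.trunc (b N / b r))%N.
Proof.
move=> r1 rN gf; have hb := good_bound r N k f r1 rN gf.
have br := b_pos r r1.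
rewrite leqNgt truncn_lt_nat ?divr_ge0 ?b_ge0 // -leNgt ler_pdivlMr // mulr_natl.
apply: (le_trans hb); rewrite lerBlDr; apply: ler_wpDr; first exact: b_ge0.
by apply: b_mono; lia.
Qed.

Lemma good_ext r N k f : good r N k f ->
  ~ (Ash r N `<=` bu (fun i => ball (f i) (6 * r)%N) k) ->
  exists f', good r N k.+1 f'.
Proof.
move=> [fA fsep] ncov.
have [x [Ax nx]] : exists x, Ash r N x /\ ~ bu (fun i => ball (f i) (6 * r)%N) k x.
  apply: contrapT => hn; apply: ncov => x Ax; apply: contrapT => nx; apply: hn; by exists x.
have s1 : forall i, (i < k)%N -> ~ P (6 * r)%N (mul (inv (f i)) x).
  move=> i ik Pi; apply: nx; apply: (bu_in _ _ i _ ik).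
  by exists (mul (inv (f i)) x) => //; rewrite massoc mulgV mul1g.
have s2 : forall i, (i < k)%N -> ~ P (6 * r)%N (mul (inv x) (f i)).
  move=> i ik /pow_inv; rewrite invM invK; exact: s1.
exists (fun i => if i == k then x else f i); split.
  move=> i ik; case: (eqVneq i k) => [_|nik]; first exact: Ax.
  apply: fA; rewrite ltn_neqAle nik /=; by rewrite -ltnS.
move=> i j ik jk ij.
case: (eqVneq i k) => [ei|nik]; case: (eqVneq j k) => [ej|njk].
- by exfalso; apply: ij; rewrite ei ej.
- apply: s2; rewrite ltn_neqAle njk /=; by rewrite -ltnS.
- apply: s1; rewrite ltn_neqAle nik /=; by rewrite -ltnS.
- apply: fsep => //.
  + rewrite ltn_neqAle nik /=; by rewrite -ltnS.
  + rewrite ltn_neqAle njk /=; by rewrite -ltnS.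
Qed.

Lemma cover_exists r N : (1 <= r)%N -> (4 * r <= N)%N ->
  exists k f, good r N k f /\ Ash r N `<=` bu (fun i => ball (f i) (6 * r)%N) k.
Proof.
move=> r1 rN; set M := Num.Def.trunc (b N / b r).
suff H : forall d k f, good r N k f -> (M <= k + d)%N ->
    exists k f, good r N k f /\ Ash r N `<=` bu (fun i => ball (f i) (6 * r)%N) k.
  by apply: (H M 0%N (fun _ => e)) => //; split.
elim=> [|d IH] k f gf Mk.
  have [cov|ncov] := pselect (Ash r N `<=` bu (fun i => ball (f i) (6 * r)%N) k).
    by exists k, f.
  have [f' gf'] := good_ext r N k f gf ncov.
  have := good_le r N k.+1 f' r1 rN gf'; rewrite -/M; lia.
have [cov|ncov] := pselect (Ash r N `<=` bu (fun i => ball (f i) (6 * r)%N) k).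
  by exists k, f.
have [f' gf'] := good_ext r N k f gf ncov.
by apply: (IH k.+1 f' gf'); lia.
Qed.

Lemma key r N C : (1 <= r)%N -> (4 * r <= N)%N ->
  (forall n, (1 <= n)%N -> b (2 * n)%N <= C * b n) ->
  b N - b (N - r)%N <= C ^+ 3 * (b (N - r)%N - b (N - 4 * r)%N).
Proof.
move=> r1 rN Cd.
have C0 : 0 <= C.
  have := Cd 1%N isT; have := b_pos 1 (leqnn 1) => h1 h2.
  have h3 : 0 <= C * b 1 := le_trans (b_ge0 _) h2.
  by rewrite pmulr_lge0 in h3.
have [k [f [gf cov]]] := cover_exists r N r1 rN.
have mF : forall i, measurable (ball (f i) (6 * r)%N : set (borel_of G)).
  by move=> i; exact: ball_meas.
have h1 : b N - b (N - r)%N <= b (6 * r)%N *+ k.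
  rewrite -lee_fin -mann; last lia.
  apply: le_trans (m_bu_le _ k (b (6 * r)%N) mF (fun i _ => mball _ _)).
  apply: le_measure; rewrite ?inE; last exact: cov.
    by apply: measurableD; exact: P_meas.
  exact: bu_meas.
have h2 : b (6 * r)%N <= C ^+ 3 * b r.
  have d1 := Cd r r1.
  have d2 := Cd (2 * r)%N (ltac:(lia)).
  have d3 := Cd (2 * (2 * r))%N (ltac:(lia)).
  have d0 := b_mono (6 * r)%N (2 * (2 * (2 * r)))%N (ltac:(lia)).
  have e3 : C ^+ 3 * b r = C * (C * (C * b r)) by rewrite !exprSr expr0 mul1r !mulrA.
  rewrite e3; apply: (le_trans d0); apply: (le_trans d3); apply: ler_wpM2l => //.
  apply: (le_trans d2); apply: ler_wpM2l => //.
apply: (le_trans h1); rewrite -mulr_natr.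
apply: le_trans (ler_wpM2r (ler0n _ k) h2) _.
rewrite -mulrA mulr_natr; apply: ler_wpM2l; first exact: exprn_ge0.
exact: good_bound r N k f r1 rN gf.
Qed.

Lemma iter C j : (forall n, (1 <= n)%N -> b (2 * n)%N <= C * b n) -> 0 <= C ->
  forall r N, (1 <= r)%N -> (r * 4 ^ j <= N)%N ->
  b N - b (N - r)%N <= (C ^+ 3 / (C ^+ 3 + 1)) ^+ j * b N.
Proof.
move=> Cd C0; elim: j => [|j IH] r N r1 rN.
  by rewrite expr0 mul1r; have := b_ge0 (N - r)%N; lra.
have K0 : 0 <= C ^+ 3 by rewrite exprn_ge0.
have h4 : (4 * r <= N)%N.
  apply: leq_trans rN; rewrite expnS mulnA [(r * 4)%N]mulnC.
  by rewrite leq_pmulr // expn_gt0.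
have hk := key r N C r1 h4 Cd.
have hi := IH (4 * r)%N N (ltac:(lia)) (ltac:(move: rN; rewrite expnS; lia)).
set th := C ^+ 3 / (C ^+ 3 + 1).
have th0 : 0 <= th by rewrite divr_ge0 // addr_ge0.
have step : b N - b (N - r)%N <= th * (b N - b (N - 4 * r)%N).
  rewrite /th mulrC mulrA ler_pdivlMr; last by rewrite ltr_pwDr.
  nra.
apply: (le_trans step); rewrite exprS -mulrA; exact: ler_wpM2l.
Qed.


Lemma C0_ge1 C0 : (forall n, (1 <= n)%N -> b (2 * n)%N <= C0 * b n) -> 1 <= C0.
Proof.
move=> Cd; have h := Cd 1%N isT; have b1 := b_pos 1 (leqnn 1).
have b12 : b 1 <= b 2 := b_mono 1 2 isT.
have : b 1 <= C0 * b 1 := le_trans b12 h.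
by rewrite -{1}[b 1]mul1r ler_pM2r.
Qed.

Lemma powR_anti (x y d : R) : 0 < x -> x <= y -> 0 <= d -> y `^ (- d) <= x `^ (- d).
Proof.
move=> x0 xy d0; rewrite !powRN lef_pV2 ?posrE ?powR_gt0 //; last exact: lt_le_trans xy.
by apply: ge0_ler_powR => //; rewrite nnegrE ltW //; exact: lt_le_trans xy.
Qed.

Lemma part1 C0 : (forall n, (1 <= n)%N -> b (2 * n)%N <= C0 * b n) ->
  exists (delta C : R), 0 < delta /\ 0 < C /\
     forall n : nat, (1 <= n)%N ->
       (m (P n.+1 `\` P n) <= (C * (n%:R `^ (- delta)))%:E * m (P n))%E.
Proof.
move=> Cd; have C1 := C0_ge1 C0 Cd.
have C00 : 0 <= C0 by apply: le_trans C1.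
set K := C0 ^+ 3.
have K1 : 1 <= K by rewrite /K exprn_ege1.
set th := K / (K + 1).
have th0 : 0 < th by rewrite divr_gt0 //; lra.
have th1 : th < 1 by rewrite /th ltr_pdivrMr; lra.
have l4 : 0 < ln (4 : R) by apply: ln_gt0; lra.
set d := - ln th / ln 4.
have d0 : 0 < d by rewrite /d divr_gt0 // oppr_gt0 ln_lt0 // th0.
have p4 : (4 : R) `^ (- d) = th.
  rewrite /powR (negbTE (_ : (4 : R) != 0)); last by apply/eqP; lra.
  have hd : - d * ln (4 : R) = ln th.
    by rewrite /d mulNr -mulrA mulVf ?mulr1 ?opprK // gt_eqF.
  by rewrite hd lnK // posrE.
exists d, (C0 / th); split => //; split; first by rewrite divr_gt0 //; lra.
move=> n n1.
rewrite mann // mP -EFinM lee_fin.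
pose j := trunc_log 4 n.+1.
have [hj1 hj2] : (4 ^ j <= n.+1)%N /\ (n.+1 < 4 ^ j.+1)%N.
  by have /andP[? ?] := trunc_log_bounds (isT : (1 < 4)%N) (isT : (0 < n.+1)%N).
have hi := iter C0 j Cd C00 1 n.+1 isT (ltac:(by rewrite mul1n; lia)).
rewrite subn1 /= -/K -/th in hi.
have hb : b n.+1 <= C0 * b n.
  apply: le_trans (Cd n n1); apply: b_mono; lia.
have bn0 := b_ge0 n.
have thj : th ^+ j.+1 <= n%:R `^ (- d).
  have -> : th ^+ j.+1 = ((4 ^ j.+1)%N%:R : R) `^ (- d).
    rewrite natrX -powR_mulrn ?ler0n // -powRrM mulrC powRrM p4 powR_mulrn //.
    exact: ltW.
  apply: powR_anti; [by rewrite ltr0n | | exact: ltW].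
  by rewrite ler_nat; lia.
have thj0 : 0 <= th ^+ j by rewrite exprn_ge0 // ltW.
apply: (le_trans hi); apply: (le_trans (ler_wpM2l thj0 hb)).
have eq1 : th ^+ j * C0 = C0 / th * th ^+ j.+1.
  rewrite exprSr; field; by rewrite gt_eqF.
rewrite mulrA; apply: ler_wpM2r => //; rewrite eq1.
apply: ler_wpM2l => //; rewrite divr_ge0 // ltW //.
Qed.

Lemma symd_sub g k n : P k g -> (k <= n)%N ->
  symdiff [set mul x g | x in P n] (P n) `<=` P (n + k)%N `\` P (n - k)%N.
Proof.
move=> Pg kn y [[[x Px <-] nP]|[Py nPg]].
  split; first exact: pow_add.
  by move=> h; apply: nP; apply: (pow_mono (n - k)%N n) => //; lia.
split; first by apply: (pow_mono n (n + k)%N) => //; lia.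
move=> h; apply: nPg; exists (mul y (inv g)); last by rewrite -massoc mulVg mulg1.
have -> : n = (n - k + k)%N by lia.
apply: pow_add => //; exact: pow_inv.
Qed.

Lemma symd_meas g n : measurable (symdiff [set mul x g | x in P n] (P n) : set (borel_of G)).
Proof.
apply: measurableU; apply: measurableD; try exact: P_meas;
  apply: cpt_meas; exact: rtr_cpt.
Qed.

Lemma symd_bound g k n : P k g -> (k <= n)%N ->
  fine (m (symdiff [set mul x g | x in P n] (P n))) <= b (n + k)%N - b (n - k)%N.
Proof.
move=> Pg kn; have sub := symd_sub g k n Pg kn.
have sub' : symdiff [set mul x g | x in P n] (P n) `<=` P (n + k)%N.
  by move=> y /sub [].
rewrite -lee_fin -(sub_fin _ (n + k)%N (symd_meas g n) sub') -mann; last lia.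
apply: le_measure; rewrite ?inE; [exact: symd_meas | | exact: sub].
by apply: measurableD; exact: P_meas.
Qed.


Lemma part2 C0 : (forall n, (1 <= n)%N -> b (2 * n)%N <= C0 * b n) ->
  forall g k0, P k0 g ->
  (fun n : nat => fine (m (symdiff [set mul x g | x in P n] (P n))) / fine (m (P n)))
    @ \oo --> (0 : R).
Proof.
move=> Cd g k0 Pk0.
have C1 := C0_ge1 C0 Cd; have C00 : 0 <= C0 by apply: le_trans C1.
pose k := k0.+1.
have Pg : P k g by exact: powS_sub.
set th := C0 ^+ 3 / (C0 ^+ 3 + 1).
have K1 : 1 <= C0 ^+ 3 by rewrite exprn_ege1.
have th0 : 0 < th by rewrite divr_gt0 //; lra.
have th1 : th < 1 by rewrite /th ltr_pdivrMr; lra.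
have hb : forall J n, (2 * k * 4 ^ J <= n + k)%N -> (k <= n)%N ->
    fine (m (symdiff [set mul x g | x in P n] (P n))) / fine (m (P n)) <= th ^+ J * C0.
  move=> J n hJ kn.
  have n1 : (1 <= n)%N by apply: leq_trans kn.
  have bn := b_pos n n1.
  rewrite -/(b n) ler_pdivrMr //.
  apply: (le_trans (symd_bound g k n Pg kn)).
  have hi := iter C0 J Cd C00 (2 * k)%N (n + k)%N (ltac:(lia)) hJ.
  have -> : (n - k = n + k - 2 * k)%N by lia.
  apply: (le_trans hi); rewrite -mulrA; apply: ler_wpM2l; first by rewrite exprn_ge0 // ltW.
  apply: le_trans (Cd n n1); apply: b_mono; lia.
apply/cvgrPdist_le => eps eps0.
have : `|th| < 1 by rewrite ger0_norm // ltW.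
move=> /cvg_expr /cvgrPdist_le /(_ (eps / C0)) [].
  by rewrite divr_gt0 //; lra.
move=> J _ HJ.
have {}HJ : th ^+ J <= eps / C0.
  have := HJ J (leqnn J); rewrite /= sub0r normrN ger0_norm //.
  exact: exprn_ge0 (ltW th0).
exists (2 * k * 4 ^ J)%N => // n /= hn.
have kn : (k <= n)%N.
  have h4 : (0 < 4 ^ J)%N by rewrite expn_gt0.
  move: hn h4; set x := (4 ^ J)%N; nia.
rewrite sub0r normrN ger0_norm.
  have hJn : (2 * k * 4 ^ J <= n + k)%N by apply: leq_trans hn (leq_addr _ _).
  apply: (le_trans (hb J n hJn kn)).
  rewrite -ler_pdivlMr; [exact: HJ | lra].
apply: divr_ge0; apply: fine_ge0; exact: measure_ge0.
Qed.


Lemma dbl C0 : (forall n : nat, (1 <= n)%N ->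
     (m (set_pow mul e V (2 * n)) <= C0%:E * m (set_pow mul e V n))%E) ->
  forall n, (1 <= n)%N -> b (2 * n)%N <= C0 * b n.
Proof. by move=> h n n1; have := h n n1; rewrite -lee_fin EFinM -!mP. Qed.

End Main.

Theorem theorem4p14 (R : realType) (G : ptopologicalType)
  (mul : G -> G -> G) (inv : G -> G) (e : G)
  (m : {measure set (borel_of G) -> \bar R}) (V : set G) :
  lcsc_group mul inv e ->
  haar_measure mul m ->
  compact_sym_gen_nbhs mul inv e V ->
  (exists C0 : R, forall n : nat, (1 <= n)%N ->
     (m (set_pow mul e V (2 * n)) <= C0%:E * m (set_pow mul e V n))%E) ->
  (exists (delta C : R), 0 < delta /\ 0 < C /\
     forall n : nat, (1 <= n)%N ->
       (m (set_pow mul e V n.+1 `\` set_pow mul e V n)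
          <= (C * (n%:R `^ (- delta)))%:E * m (set_pow mul e V n))%E)
  /\
  (forall g : G,
     (fun n : nat =>
        fine (m (symdiff [set mul x g | x in set_pow mul e V n]
                         (set_pow mul e V n)))
        / fine (m (set_pow mul e V n))) @ \oo --> (0 : R)).
Proof.
move=> [massoc munit minv [mcont _] [hG _ _]] [hinv hfin hpos] [Vc Vs Vn Vgen] [C0 hC0].
have Cd : forall n, (1 <= n)%N -> b R G mul e m V (2 * n)%N <= C0 * b R G mul e m V n.
  by apply: dbl => //.
split.
  exact: (part1 _ _ _ _ _ _ _ massoc munit minv mcont hG hinv hfin hpos Vc Vs Vn C0 Cd).
move=> g.
have : (\bigcup_n set_pow mul e V n) g by rewrite Vgen.
case=> k _ Pk.
exact: (part2 _ _ _ _ _ _ _ massoc munit minv mcont hG hinv hfin hpos Vc Vs Vn C0 Cd g k Pk).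
Qed.
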